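(* Let $n\ge1$, $a_1,\dots,a_n,b\in\mathbb{Z}$, $m\in\mathbb{Z}$, $m\ne0$, and suppose the congruence $$a_1x_1+\dots+a_nx_n\equiv b\pmod m \qquad (1)$$ has at least one solution. Let $P_1=(a_1,\dots,a_n,m)\cdot|m|^{n-1}$ and $P_2=(a_1,m)\cdots(a_n,m)$. Then (1) has a base, and every base of (1) consists of exactly $P_1/P_2$ solutions (in particular $P_1/P_2$ is a positive integer, and all bases of (1) have the same number of elements).
   Context: $(c_1,\dots,c_k)$ denotes the positive greatest common divisor. A solution of (1) is a vector in $\mathbb{Z}^n$ satisfying (1); two solutions $X,Y$ are distinct if $X_i\not\equiv Y_i\pmod m$ for some $i$. For $i=1,\dots,n$ let $V_i\in\mathbb{Z}^n$ be the vector whose $i$-th coordinate is $\frac{m}{(a_i,m)}$ and whose other coordinates are $0$, and let $A\subseteq\mathbb{Z}^n$ be the $\mathbb{Z}$-module generated by $V_1,\dots,V_n$. Two solutions $X,Y$ of (1) are called independent if $X-Y\notin A$, and dependent otherwise. Solutions $X^1,\dots,X^s$ of (1) form a base of (1) if they are pairwise independent and every solution of (1) is congruent modulo $m$ (coordinatewise) to a vector of the form $X^j+\sum_{i=1}^n t_iV_i$ for some $j\in\{1,\dots,s\}$ and integers $t_i$ with $0\le t_i<(a_i,m)$. *)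

(* Defs.v *)
From HB Require Import structures.
From mathcomp Require Import all_boot all_order all_algebra.
Set Implicit Arguments. Unset Strict Implicit. Unset Printing Implicit Defensive.
Import Order.TTheory GRing.Theory Num.Theory.
Local Open Scope ring_scope.

Definition is_solution (n : nat) (a : 'I_n -> int) (b m : int) (X : 'I_n -> int) : Prop :=
  (\sum_(i < n) a i * X i = b %[mod m])%Z.

Definition Vvec (n : nat) (a : 'I_n -> int) (m : int) (i : 'I_n) : 'I_n -> int :=
  fun j => if i == j then (m %/ gcdz (a i) m)%Z else 0.

Definition inA (n : nat) (a : 'I_n -> int) (m : int) (v : 'I_n -> int) : Prop :=
  exists t : 'I_n -> int, forall j, v j = \sum_(i < n) t i * Vvec a m i j.

Definition independent (n : nat) (a : 'I_n -> int) (m : int) (X Y : 'I_n -> int) : Prop :=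
  ~ inA a m (fun j => X j - Y j).

Definition is_base (n : nat) (a : 'I_n -> int) (b m : int) (s : nat)
    (Xs : 'I_s -> ('I_n -> int)) : Prop :=
  [/\ forall k, is_solution a b m (Xs k),
      forall k l, k != l -> independent a m (Xs k) (Xs l) &
      forall Y, is_solution a b m Y ->
        exists k : 'I_s, exists t : 'I_n -> int,
          (forall i, 0 <= t i < gcdz (a i) m) /\
          forall j, (Y j = Xs k j + \sum_(i < n) t i * Vvec a m i j %[mod m])%Z].

Definition P1 (n : nat) (a : 'I_n -> int) (m : int) : int :=
  gcdz (\big[gcdz/0%Z]_(i < n) a i) m * `|m| ^+ n.-1.

Definition P2 (n : nat) (a : 'I_n -> int) (m : int) : int :=
  \prod_(i < n) gcdz (a i) m.

(* Main.v *)
Require Import Defs.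
From HB Require Import structures.
From mathcomp Require Import all_boot all_order all_algebra zify ring.
Import Order.TTheory GRing.Theory Num.Theory.
Set Implicit Arguments. Unset Strict Implicit. Unset Printing Implicit Defensive.
Local Open Scope ring_scope.

Definition gi n (a : 'I_n -> int) (m : int) (i : 'I_n) : nat := gcdn `|a i| `|m|.
Definition qi n (a : 'I_n -> int) (m : int) (i : 'I_n) : nat := (`|m| %/ gi a m i)%N.

Lemma gi_gt0 n (a : 'I_n -> int) m i : m != 0 -> (0 < gi a m i)%N.
Proof. by move=> m0; rewrite /gi gcdn_gt0 !absz_gt0 m0 orbT. Qed.

Lemma qi_mul n (a : 'I_n -> int) m i : (qi a m i * gi a m i = `|m|)%N.
Proof. by rewrite /qi divnK // /gi dvdn_gcdr. Qed.

Lemma qi_gt0 n (a : 'I_n -> int) m i : m != 0 -> (0 < qi a m i)%N.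
Proof.
move=> m0; have := qi_mul a m i; case: (qi a m i) => // /esym /eqP.
by rewrite mul0n absz_eq0 (negPf m0).
Qed.

Lemma qi_le n (a : 'I_n -> int) m i : (qi a m i <= `|m|)%N.
Proof. exact: leq_div. Qed.

Lemma m_dvd_aq n (a : 'I_n -> int) m i : (m %| a i * (qi a m i)%:Z)%Z.
Proof.
rewrite dvdzE abszM absz_nat -{1}(qi_mul a m i) mulnC.
by apply: dvdn_mul; [rewrite /gi dvdn_gcdl|].
Qed.

Lemma gcdz_gi n (a : 'I_n -> int) m i : gcdz (a i) m = (gi a m i)%:Z.
Proof. by []. Qed.

Lemma mu_mul n (a : 'I_n -> int) m i : (m %/ gcdz (a i) m)%Z * gcdz (a i) m = m.
Proof. by rewrite divzK // dvdz_gcdr. Qed.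

Lemma abs_mu n (a : 'I_n -> int) m i : m != 0 -> `|(m %/ gcdz (a i) m)%Z|%N = qi a m i.
Proof.
move=> m0; have := congr1 absz (mu_mul a m i).
rewrite abszM gcdz_gi absz_nat -(qi_mul a m i) => /eqP.
by rewrite eqn_mul2r eqn0Ngt gi_gt0 // => /eqP.
Qed.

Definition toZ n N (f : {ffun 'I_n -> 'I_N}) : 'I_n -> int := fun i => (f i : nat)%:Z.
Definition red n (a : 'I_n -> int) m (X : 'I_n -> int) : {ffun 'I_n -> 'I_(`|m|.+1)} :=
  [ffun i => inord `|(X i %% (qi a m i)%:Z)%Z|%N].
Definition inq n (a : 'I_n -> int) m (f : {ffun 'I_n -> 'I_(`|m|.+1)}) : bool :=
  [forall i, (f i < qi a m i)%N].
Arguments inq {n} a m f.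
Definition sumaX n (a : 'I_n -> int) (X : 'I_n -> int) : int := \sum_(i < n) a i * X i.

Lemma modq_ge0 n (a : 'I_n -> int) m i x : m != 0 -> 0 <= (x %% (qi a m i)%:Z)%Z.
Proof. by move=> m0; rewrite modz_ge0 // eqz_nat -lt0n qi_gt0. Qed.

Lemma modq_lt n (a : 'I_n -> int) m i x : m != 0 -> (x %% (qi a m i)%:Z)%Z < (qi a m i)%:Z.
Proof. by move=> m0; have := ltz_mod x (d := (qi a m i)%:Z); rewrite eqz_nat -lt0n qi_gt0 //; apply. Qed.

Lemma red_val n (a : 'I_n -> int) (m : int) (X : 'I_n -> int) i : m != 0 ->
  (red a m X i : nat)%:Z = (X i %% (qi a m i)%:Z)%Z.
Proof.
move=> m0; rewrite ffunE inordK; first by rewrite gez0_abs ?modq_ge0.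
have := modq_ge0 a i (X i) m0; have := modq_lt a i (X i) m0; have := qi_le a m i.
lia.
Qed.

Lemma red_lt n (a : 'I_n -> int) (m : int) (X : 'I_n -> int) i : m != 0 -> (red a m X i < qi a m i)%N.
Proof.
move=> m0; have := red_val a X i m0; have := modq_lt a i (X i) m0. lia.
Qed.

Lemma red_inq n (a : 'I_n -> int) (m : int) (X : 'I_n -> int) : m != 0 -> inq a m (red a m X).
Proof. by move=> m0; apply/forallP => i; apply: red_lt. Qed.

Lemma red_eqP n (a : 'I_n -> int) (m : int) (X Y : 'I_n -> int) : m != 0 ->
  reflect (forall i, ((qi a m i)%:Z %| X i - Y i)%Z) (red a m X == red a m Y).
Proof.
move=> m0; apply: (iffP eqP) => [E i | H].
  rewrite -eqz_mod_dvd; apply/eqP; rewrite -!red_val // E //.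
apply/ffunP => i; apply/val_inj => /=; apply/eqP; rewrite -eqz_nat !red_val //.
by rewrite eqz_mod_dvd.
Qed.

Lemma red_toZ n (a : 'I_n -> int) (m : int) f : m != 0 -> inq a m f -> red a m (toZ f) = f.
Proof.
move=> m0 /forallP fq; apply/ffunP => i; apply/val_inj => /=; apply/eqP.
rewrite -eqz_nat red_val // /toZ modz_small //; have := fq i; lia.
Qed.

Lemma sum_cong n (a : 'I_n -> int) (m : int) (X Y : 'I_n -> int) :
  (forall i, ((qi a m i)%:Z %| X i - Y i)%Z) -> (m %| sumaX a X - sumaX a Y)%Z.
Proof.
move=> H; rewrite /sumaX -sumrB; apply: rpred_sum => i _.
rewrite -mulrBr; have /dvdzP [k ->] := H i.
by rewrite mulrA mulrAC; apply: dvdz_mulr; apply: m_dvd_aq.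
Qed.

Lemma sumV n (a : 'I_n -> int) (m : int) (t : 'I_n -> int) j :
  \sum_(i < n) t i * Vvec a m i j = t j * (m %/ gcdz (a j) m)%Z.
Proof.
rewrite (bigD1 j) //= big1 ?addr0 /Vvec ?eqxx // => i ij.
by rewrite (negPf ij) mulr0.
Qed.

Lemma q_dvd_mu n (a : 'I_n -> int) (m : int) j x : m != 0 ->
  ((qi a m j)%:Z %| x)%Z = ((m %/ gcdz (a j) m)%Z %| x)%Z.
Proof. by move=> m0; rewrite !dvdzE abs_mu. Qed.

Lemma inAP n (a : 'I_n -> int) (m : int) (v : 'I_n -> int) : m != 0 ->
  inA a m v <-> (forall j, ((qi a m j)%:Z %| v j)%Z).
Proof.
move=> m0; split => [[t Ht] j | H].
  by rewrite Ht sumV q_dvd_mu // dvdz_mull.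
exists (fun j => (v j %/ (m %/ gcdz (a j) m)%Z)%Z) => j.
by rewrite sumV divzK // -q_dvd_mu.
Qed.

Definition Tq n (a : 'I_n -> int) (m : int) := [set f : {ffun 'I_n -> 'I_(`|m|.+1)} | inq a m f].
Definition fib n (a : 'I_n -> int) (m : int) (c : int) :=
  [set f : {ffun 'I_n -> 'I_(`|m|.+1)} | inq a m f && (m %| sumaX a (toZ f) - c)%Z].

Lemma card_lt_ord K q : (q <= K)%N -> #|[pred j : 'I_K | (j < q)%N]| = q.
Proof.
move=> qK; rewrite -sum1_card -[RHS]card_ord -sum1_card.
by rewrite (big_ord_widen _ (fun _ => 1%N) qK).
Qed.

Lemma card_Tq n (a : 'I_n -> int) (m : int) : #|Tq a m| = (\prod_(i < n) qi a m i)%N.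
Proof.
have -> : #|Tq a m| = #|(family (fun i : 'I_n => [pred j : 'I_(`|m|.+1) | (j < qi a m i)%N])
                          : simpl_pred {ffun 'I_n -> 'I_(`|m|.+1)})|.
  apply: eq_card => f; rewrite inE /inq; apply/forallP/familyP => H i; exact: H.
rewrite card_family foldrE big_image /=; apply: eq_bigr => i _.
by rewrite card_lt_ord // ltnW // ltnS qi_le.
Qed.

Definition dd n (a : 'I_n -> int) (m : int) : int := gcdz (\big[gcdz/0%Z]_(i < n) a i) m.

Lemma big_bezout n (a : 'I_n -> int) :
  exists u : 'I_n -> int, \big[gcdz/0%Z]_(i < n) a i = \sum_(i < n) u i * a i.
Proof.
apply: (big_ind (fun x => exists u : 'I_n -> int, x = \sum_(i < n) u i * a i)).
- by exists (fun _ => 0); rewrite big1 // => i _; rewrite mul0r.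
- move=> x y [ux ->] [uy ->]; have [v [w <-]] := Bezoutz (\sum_(i < n) ux i * a i) (\sum_(i < n) uy i * a i).
  exists (fun i => v * ux i + w * uy i); rewrite !mulr_sumr -big_split; apply: eq_bigr => i _ /=.
  by rewrite mulrDl !mulrA.
- move=> i _; exists (fun j => if j == i then 1 else 0).
  rewrite (bigD1 i) //= eqxx mul1r big1 ?addr0 // => j /negPf ->; by rewrite mul0r.
Qed.

Lemma dd_dvd_a n (a : 'I_n -> int) (m : int) i : (dd a m %| a i)%Z.
Proof.
apply: dvdz_trans (dvdz_gcdl _ _) _.
have : i \in index_enum 'I_n by rewrite mem_index_enum.
elim: (index_enum 'I_n) => // k r IH; rewrite inE big_cons => /orP [/eqP <-|/IH H].
  exact: dvdz_gcdl.
exact: dvdz_trans (dvdz_gcdr _ _) H.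
Qed.

Lemma dd_dvd_m n (a : 'I_n -> int) (m : int) : (dd a m %| m)%Z.
Proof. exact: dvdz_gcdr. Qed.

Lemma dd_dvd_sum n (a : 'I_n -> int) (m : int) X : (dd a m %| sumaX a X)%Z.
Proof. by apply: rpred_sum => i _; apply: dvdz_mulr; apply: dd_dvd_a. Qed.

Lemma red_dvd n (a : 'I_n -> int) (m : int) (X : 'I_n -> int) i : m != 0 ->
  ((qi a m i)%:Z %| toZ (red a m X) i - X i)%Z.
Proof.
move=> m0; rewrite /toZ red_val // {2}(divz_eq (X i) (qi a m i)%:Z).
by rewrite opprD addrCA subrr addr0 rpredN dvdz_mull.
Qed.

Lemma sum_red n (a : 'I_n -> int) (m : int) (X : 'I_n -> int) : m != 0 ->
  (m %| sumaX a (toZ (red a m X)) - sumaX a X)%Z.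
Proof. by move=> m0; apply: sum_cong => i; apply: red_dvd. Qed.

Lemma fib_ne n (a : 'I_n -> int) (m : int) c : m != 0 ->
  (exists f, f \in fib a m c) <-> (dd a m %| c)%Z.
Proof.
move=> m0; split => [[f] | ].
  rewrite inE => /andP [_ H].
  have H1 : (dd a m %| sumaX a (toZ f) - c)%Z := dvdz_trans (dd_dvd_m a m) H.
  have -> : c = sumaX a (toZ f) - (sumaX a (toZ f) - c) by rewrite opprB addrC subrK.
  by apply: rpredB => //; apply: dd_dvd_sum.
move=> /dvdzP [k ->].
have [u Hu] := big_bezout a.
have [v [w Hvw]] := Bezoutz (\big[gcdz/0%Z]_(i < n) a i) m.
pose X := fun i => k * v * u i.
exists (red a m X); rewrite inE red_inq //=.
have -> : sumaX a (toZ (red a m X)) - k * dd a m =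
   (sumaX a (toZ (red a m X)) - sumaX a X) + (sumaX a X - k * dd a m) by rewrite addrA subrK.
apply: rpredD; first exact: sum_red.
have -> : sumaX a X = k * v * \big[gcdz/0%Z]_(i < n) a i.
  rewrite Hu /sumaX mulr_sumr; apply: eq_bigr => i _; rewrite /X.
  by rewrite mulrC -!mulrA [u i * _]mulrC.
rewrite /dd -Hvw mulrDr mulrA opprD addrA subrr add0r.
by rewrite rpredN mulrA dvdz_mull.
Qed.

Lemma sumaX_lin n (a : 'I_n -> int) (X Y Z : 'I_n -> int) :
  sumaX a (fun i => X i + Y i - Z i) = sumaX a X + sumaX a Y - sumaX a Z.
Proof.
by rewrite /sumaX -big_split -sumrB; apply: eq_bigr => i _; rewrite mulrBr mulrDr.
Qed.

Lemma fib_le n (a : 'I_n -> int) (m : int) c c' f0 f1 : m != 0 ->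
  f0 \in fib a m c -> f1 \in fib a m c' -> (#|fib a m c| <= #|fib a m c'|)%N.
Proof.
move=> m0; rewrite !inE => /andP [q0 H0] /andP [q1 H1].
pose tau (f : {ffun 'I_n -> 'I_(`|m|.+1)}) := red a m (fun i => toZ f i + toZ f1 i - toZ f0 i).
have inj : {in fib a m c &, injective tau}.
  move=> f f'; rewrite !inE => /andP [qf _] /andP [qf' _] /eqP /red_eqP => /(_ m0) H.
  rewrite -(red_toZ m0 qf) -(red_toZ m0 qf'); apply/eqP/red_eqP => // i.
  have E : (toZ f i + toZ f1 i - toZ f0 i) - (toZ f' i + toZ f1 i - toZ f0 i) = toZ f i - toZ f' i by ring.
  by have := H i => /=; rewrite E.
rewrite -(card_in_imset inj); apply: subset_leq_card; apply/subsetP => g /imsetP [f].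
rewrite inE => /andP [qf Hf] ->; rewrite inE red_inq //=.
have -> : sumaX a (toZ (tau f)) - c' =
  (sumaX a (toZ (tau f)) - sumaX a (fun i => toZ f i + toZ f1 i - toZ f0 i)) +
  ((sumaX a (toZ f) - c) + (sumaX a (toZ f1) - c') - (sumaX a (toZ f0) - c)).
  rewrite sumaX_lin; ring.
apply: rpredD; [exact: sum_red | apply: rpredB => //; exact: rpredD].
Qed.

Lemma card_Tq_sum n (a : 'I_n -> int) (m : int) : m != 0 ->
  #|Tq a m| = (\sum_(j < `|m|) #|fib a m (j%:Z)|)%N.
Proof.
move=> m0; set M := `|m|%N; set Mz := (M%:Z).
have Mz0 : Mz != 0 by rewrite eqz_nat absz_eq0.
pose p (f : {ffun 'I_n -> 'I_M.+1}) : 'I_M.+1 := inord `|(sumaX a (toZ f) %% Mz)%Z|%N.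
have pv f : ((p f : nat)%:Z = (sumaX a (toZ f) %% Mz)%Z) /\ (p f < M)%N.
  have := modz_ge0 (sumaX a (toZ f)) Mz0; have := ltz_mod (sumaX a (toZ f)) Mz0.
  rewrite /p /Mz => h1 h2. rewrite inordK; last lia. split; [exact: gez0_abs | lia].
rewrite -sum1_card (partition_big p (fun j : 'I_M.+1 => (j < M)%N)); last by move=> f _; case: (pv f).
rewrite (big_ord_widen M.+1 (fun j => #|fib a m (j%:Z)|) (leqnSn M)).
apply: eq_bigr => j jM; rewrite sum1dep_card; apply: eq_card => f; rewrite !inE.
congr (_ && _); case: (pv f) => pf _.
rewrite -[(m %| _)%Z]/(Mz %| _)%Z -eqz_mod_dvd (modz_small (m := j%:Z)); last by rewrite /Mz; lia.
apply/eqP/eqP => [<-|E]; first by rewrite pf.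
by apply/val_inj; apply/eqP; rewrite /= -eqz_nat pf E.
Qed.

Lemma card_fib n (a : 'I_n -> int) (m : int) b c : m != 0 ->
  (exists f, f \in fib a m b) ->
  #|fib a m c| = if (dd a m %| c)%Z then #|fib a m b| else 0%N.
Proof.
move=> m0 [f0 Hf0]; case: ifP => Hc.
  have [f1 Hf1] := (fib_ne a c m0).2 Hc.
  by apply/eqP; rewrite eqn_leq (fib_le m0 Hf1 Hf0) (fib_le m0 Hf0 Hf1).
apply: eq_card0 => f; apply/idP => Hf.
have : (dd a m %| c)%Z by apply/(fib_ne a c m0); exists f.
by rewrite Hc.
Qed.

Lemma count_main n (a : 'I_n -> int) (m : int) b : m != 0 -> (0 < n)%N ->
  (exists f, f \in fib a m b) ->
  (#|fib a m b| * \prod_(i < n) gi a m i = `|dd a m| * `|m| ^ n.-1)%N.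
Proof.
move=> m0 n0 ex; set F := #|fib a m b|; set M := `|m|%N; set D := `|dd a m|%N.
have M0 : (0 < M)%N by rewrite absz_gt0.
have DM : (D %| M)%N by have := dd_dvd_m a m.
have D0 : (0 < D)%N by apply: (dvdn_gt0 M0 DM).
have H1 : (F * (M %/ D) = \prod_(i < n) qi a m i)%N.
  rewrite -card_Tq card_Tq_sum //.
  rewrite (eq_bigr (fun j : 'I_M => (D %| j) * F)%N); last first.
    by move=> j _; rewrite (card_fib (j%:Z) m0 ex) dvdzE absz_nat; case: (D %| j)%N; rewrite ?mul1n.
  rewrite -big_distrl /= mulnC; congr (_ * _)%N.
  rewrite divn_count_dvd big_nat_recr //= DM.
  by rewrite -(big_mkord xpredT (fun j => nat_of_bool (D %| j)%N)) [RHS]big_ltn // dvdn0 addnC.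
have H2 : (\prod_(i < n) qi a m i * \prod_(i < n) gi a m i = M ^ n)%N.
  by rewrite -big_split /= (eq_bigr (fun _ => M)) ?prod_nat_const ?card_ord // => i _; rewrite qi_mul.
have : (F * M * \prod_(i < n) gi a m i = D * M ^ n.-1 * M)%N.
  have E : (M ^ n = M ^ n.-1 * M)%N by rewrite -expnSr prednK.
  rewrite -[RHS]mulnA -E -H2 -H1 -{1}(divnK DM); set k := (M %/ D)%N; ring.
by move/eqP; rewrite mulnAC eqn_mul2r eqn0Ngt M0 => /eqP.
Qed.

Lemma solP n (a : 'I_n -> int) (b m : int) X :
  is_solution a b m X <-> (m %| sumaX a X - b)%Z.
Proof.
rewrite /is_solution -eqz_mod_dvd; split => [H|/eqP //].
by rewrite /sumaX H eqxx.
Qed.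

Lemma sol_red n (a : 'I_n -> int) (b m : int) X : m != 0 ->
  is_solution a b m X <-> red a m X \in fib a m b.
Proof.
move=> m0; rewrite solP inE red_inq //=.
have E : sumaX a (toZ (red a m X)) - b = (sumaX a (toZ (red a m X)) - sumaX a X) + (sumaX a X - b).
  by rewrite addrA subrK.
rewrite E; split => [H|H]; first by apply: rpredD => //; apply: sum_red.
have -> : sumaX a X - b = (sumaX a (toZ (red a m X)) - sumaX a X + (sumaX a X - b)) -
   (sumaX a (toZ (red a m X)) - sumaX a X) by ring.
by apply: rpredB => //; apply: sum_red.
Qed.

Lemma indepP n (a : 'I_n -> int) (m : int) X Y : m != 0 ->
  independent a m X Y <-> red a m X != red a m Y.
Proof.
move=> m0; rewrite /independent inAP //; split.
  by move=> H; apply/negP => /(@red_eqP _ a m X Y m0) H'; apply: H.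
by move=> /negP H H'; apply: H; apply/(@red_eqP _ a m X Y m0).
Qed.

Lemma cover_red n (a : 'I_n -> int) (m : int) X Y : m != 0 ->
  red a m Y = red a m X ->
  exists t : 'I_n -> int, (forall i, 0 <= t i < gcdz (a i) m) /\
     forall j, (Y j = X j + \sum_(i < n) t i * Vvec a m i j %[mod m])%Z.
Proof.
move=> m0 /eqP /(@red_eqP _ a m Y X m0) H.
pose mu j := (m %/ gcdz (a j) m)%Z.
pose w j := ((Y j - X j) %/ mu j)%Z.
exists (fun j => (w j %% gcdz (a j) m)%Z); split.
  move=> i; have g0 : gcdz (a i) m != 0 by rewrite gcdz_gi eqz_nat -lt0n gi_gt0.
  by rewrite modz_ge0 //= (lt_le_trans (ltz_mod _ g0)) // gcdz_gi normr_nat.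
move=> j; apply/eqP; rewrite eqz_mod_dvd sumV.
have hw : Y j - X j = w j * mu j by rewrite divzK // -q_dvd_mu.
have -> : Y j - (X j + (w j %% gcdz (a j) m)%Z * (m %/ gcdz (a j) m)%Z) =
   (w j %/ gcdz (a j) m)%Z * (mu j * gcdz (a j) m).
  rewrite opprD addrA hw {1}(divz_eq (w j) (gcdz (a j) m)) /mu; ring.
by rewrite mu_mul dvdz_mull.
Qed.

Lemma cover_red_inv n (a : 'I_n -> int) (m : int) X Y (t : 'I_n -> int) : m != 0 ->
  (forall j, (Y j = X j + \sum_(i < n) t i * Vvec a m i j %[mod m])%Z) ->
  red a m Y = red a m X.
Proof.
move=> m0 H; apply/eqP/(@red_eqP _ a m Y X m0) => j.
have := H j => /eqP; rewrite eqz_mod_dvd sumV => Hj.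
have qm : ((qi a m j)%:Z %| m)%Z by rewrite dvdzE absz_nat -(qi_mul a m j) dvdn_mulr.
have qmu : ((qi a m j)%:Z %| t j * (m %/ gcdz (a j) m)%Z)%Z by rewrite dvdz_mull // q_dvd_mu.
have -> : Y j - X j = (Y j - (X j + t j * (m %/ gcdz (a j) m)%Z)) + t j * (m %/ gcdz (a j) m)%Z by ring.
by apply: rpredD => //; apply: dvdz_trans qm Hj.
Qed.

Theorem theorem4 (n : nat) (a : 'I_n -> int) (b m : int) :
  (0 < n)%N -> m != 0 ->
  (exists X : 'I_n -> int, is_solution a b m X) ->
  [/\ (P2 a m %| P1 a m)%Z,
      0 < (P1 a m %/ P2 a m)%Z,
      (exists s (Xs : 'I_s -> ('I_n -> int)), is_base a b m Xs) &
      forall s (Xs : 'I_s -> ('I_n -> int)), is_base a b m Xs ->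
        (s%:Z = P1 a m %/ P2 a m)%Z].
Proof.
move=> n0 m0 [X0 HX0].
have ex : exists f, f \in fib a m b by exists (red a m X0); apply/sol_red.
have cnt := count_main m0 n0 ex.
set F := #|fib a m b| in cnt.
have E2 : P2 a m = (\prod_(i < n) gi a m i)%N%:Z.
  by rewrite /P2 -natz natr_prod; apply: eq_bigr => i _; rewrite natz.
have E1 : P1 a m = (F * \prod_(i < n) gi a m i)%N%:Z.
  rewrite cnt /P1 PoszM; congr (_ * _); rewrite -abszE -!natz natrX //.
have P20 : P2 a m != 0.
  by rewrite E2 eqz_nat -lt0n prodn_gt0 // => i; apply: gi_gt0.
have Fq : (P1 a m %/ P2 a m)%Z = F%:Z by rewrite E1 PoszM -E2 mulzK.
have F0 : (0 < F)%N by case: ex => f Hf; apply/card_gt0P; exists f.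
have hinq (k : 'I_#|fib a m b|) : inq a m (enum_val k).
  by have := enum_valP k; rewrite inE => /andP [].
split.
- by rewrite E1 PoszM -E2 dvdz_mull.
- by rewrite Fq ltz_nat.
- exists F, (fun k => toZ (enum_val k)); split.
  + move=> k; have Hk := enum_valP k; apply/(@sol_red _ a b m _ m0).
    by rewrite red_toZ //; move: Hk; rewrite inE => /andP [].
  + move=> k l kl; apply/(@indepP _ a m _ _ m0); rewrite !red_toZ ?hinq //.
    by apply: contra kl => /eqP /enum_val_inj ->.
  + move=> Y /(@sol_red _ a b m _ m0) HY.
    exists (enum_rank_in HY (red a m Y)).
    apply: (cover_red m0); rewrite red_toZ ?hinq // enum_rankK_in //.
- move=> s Xs [Hs Hind Hcov]; rewrite Fq; congr Posz.
  have inj : injective (fun k => red a m (Xs k)).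
    move=> k l E; apply/eqP; apply: contraT => kl; have := Hind k l kl.
    by move/(@indepP _ a m _ _ m0); rewrite E eqxx.
  have : [set red a m (Xs k) | k in 'I_s] = fib a m b.
    apply/setP => f; apply/imsetP/idP => [[k _ ->]|Hf].
      by apply/(@sol_red _ a b m _ m0).
    have inqf : inq a m f by move: Hf; rewrite inE => /andP [].
    have solY : is_solution a b m (toZ f) by apply/(@sol_red _ a b m _ m0); rewrite red_toZ.
    have [k [t [_ Ht]]] := Hcov _ solY.
    exists k => //; rewrite -(red_toZ m0 inqf); exact: cover_red_inv Ht.
  by move=> Eset; rewrite /F -Eset card_imset // card_ord.
Qed.
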